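(* Let $F$ be $(\ell,\omega)$-relatively smooth on $\mathcal X\cap\mathcal S$ and suppose that $(x,y)\mapsto\sqrt{D^{\mathrm{sym}}_\omega(x,y)}$ is a metric. Then for any $x\in\mathcal X\cap\mathcal S$ and any $\rho,s>0$ with $\rho>\ell/s+2\ell$, $$\frac{\Delta_\rho(x)}{C(\ell,\rho,s)}\le\Delta^+_\rho(x)\le C(\ell,\rho,s)\,\Delta_\rho(x),\qquad C(\ell,\rho,s):=\frac{(1+s)(\rho-\ell)+(1+s^{-1})\ell}{\rho-\ell-(1+s^{-1})\ell}.$$ In particular, for $s=1$, $\rho=4\ell$ one has $C(\ell,\rho,s)=8$ and $\frac18\Delta_{4\ell}(x)\le\Delta^+_{4\ell}(x)\le8\Delta_{4\ell}(x)$.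
   Context: Let $\mathcal X\subseteq\mathbb R^d$ be closed and convex, $\|\cdot\|$ a norm on $\mathbb R^d$. The problem is $\min_{x\in\mathcal X}\Phi(x):=F(x)+r(x)$, with $F$ differentiable and $r:\mathbb R^d\to\mathbb R$ convex, proper, lower semicontinuous. A DGF is $\omega:\mathrm{cl}(\mathcal S)\to\mathbb R$, $\mathcal S$ open with $\mathrm{ri}(\mathcal X)\subseteq\mathcal S$, $\omega$ continuously differentiable on $\mathcal S$ and $1$-strongly convex w.r.t. $\|\cdot\|$ on $\mathrm{cl}(\mathcal S)$; $D_\omega(x,y)=\omega(x)-\omega(y)-\langle\nabla\omega(y),x-y\rangle$ and $D^{\mathrm{sym}}_\omega(x,y):=D_\omega(x,y)+D_\omega(y,x)$. For $\rho>0$ and $x\in\mathcal X\cap\mathcal S$: $\hat x:=\arg\min_{y\in\mathcal X}[\Phi(y)+\rho D_\omega(y,x)]$, $\Delta_\rho(x):=\rho^2D^{\mathrm{sym}}_\omega(\hat x,x)$ (Bregman proximal mapping); $x^+:=\arg\min_{y\in\mathcal X}[\langle\nabla F(x),y\rangle+r(y)+\rho D_\omega(y,x)]$, $\Delta^+_\rho(x):=\rho^2D^{\mathrm{sym}}_\omega(x^+,x)$ (Bregman gradient mapping); these minimizers are assumed to exist. $F$ is $(\ell,\omega)$-relatively smooth on $\mathcal X\cap\mathcal S$ if for all $x,y\in\mathcal X\cap\mathcal S$: $-\ell D_\omega(x,y)\le F(x)-F(y)-\langle\nabla F(y),x-y\rangle\le\ell D_\omega(x,y)$. *)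

(* Defs.v *)
From HB Require Import structures.
From mathcomp Require Import all_boot all_order all_algebra.
From mathcomp Require Import all_classical all_reals all_analysis.
Set Implicit Arguments.
Unset Strict Implicit.
Unset Printing Implicit Defensive.
Import Order.TTheory GRing.Theory Num.Theory.
Import numFieldNormedType.Exports.
Local Open Scope classical_set_scope.
Local Open Scope ring_scope.

Section Defs.
Variables (R : realType) (d : nat).
Local Notation V := 'rV[R]_d.

Definition dotp (u v : V) : R := \sum_(i < d) u 0 i * v 0 i.

Definition is_norm (N : V -> R) : Prop :=
  (forall x, 0 <= N x) /\ (forall x, N x = 0 -> x = 0) /\
  (forall (a : R) x, N (a *: x) = `|a| * N x) /\
  (forall x y, N (x + y) <= N x + N y).

Definition convex_set_ (A : set V) : Prop :=
  forall x y (t : R), A x -> A y -> 0 <= t <= 1 -> A (t *: x + (1 - t) *: y).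

Definition convex_fun (f : V -> R) : Prop :=
  forall x y (t : R), 0 <= t <= 1 ->
    f (t *: x + (1 - t) *: y) <= t * f x + (1 - t) * f y.

Definition lsc (f : V -> R) : Prop :=
  forall x (a : R), a < f x -> \forall y \near x, a < f y.

Definition has_gradient_at (f : V -> R) (g : V -> V) (x : V) : Prop :=
  differentiable f x /\ forall h, 'd f x h = dotp (g x) h.

Definition aff_hull (A : set V) : set V :=
  [set z | exists (n : nat) (p : 'I_n -> V) (w : 'I_n -> R),
     (forall i, A (p i)) /\ \sum_(i < n) w i = 1 /\ z = \sum_(i < n) w i *: p i].

Definition rel_interior (A : set V) : set V :=
  [set x | A x /\ exists2 e : R, 0 < e & (ball x e `&` aff_hull A) `<=` A].

Definition is_DGF (X S : set V) (N : V -> R) (omega : V -> R) (gw : V -> V) : Prop :=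
  open S /\ rel_interior X `<=` S /\
  (forall y, S y -> has_gradient_at omega gw y /\ {for y, continuous gw}) /\
  (forall x y (t : R), closure S x -> closure S y -> 0 <= t <= 1 ->
     closure S (t *: x + (1 - t) *: y) ->
     omega (t *: x + (1 - t) *: y) <=
       t * omega x + (1 - t) * omega y - t * (1 - t) / 2 * N (x - y) ^+ 2).

Definition bregman (omega : V -> R) (gw : V -> V) (x y : V) : R :=
  omega x - omega y - dotp (gw y) (x - y).

Definition bregman_sym (omega : V -> R) (gw : V -> V) (x y : V) : R :=
  bregman omega gw x y + bregman omega gw y x.

Definition rel_smooth (A : set V) (F : V -> R) (gF : V -> V)
    (omega : V -> R) (gw : V -> V) (l : R) : Prop :=
  forall x y, A x -> A y ->
    - (l * bregman omega gw x y) <= F x - F y - dotp (gF y) (x - y) /\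
    F x - F y - dotp (gF y) (x - y) <= l * bregman omega gw x y.

Definition is_metric_on (A : set V) (dist : V -> V -> R) : Prop :=
  (forall x y, A x -> A y -> 0 <= dist x y) /\
  (forall x y, A x -> A y -> (dist x y = 0 <-> x = y)) /\
  (forall x y, A x -> A y -> dist x y = dist y x) /\
  (forall x y z, A x -> A y -> A z -> dist x z <= dist x y + dist y z).

Definition is_bregman_prox (X : set V) (F r omega : V -> R) (gw : V -> V)
    (rho : R) (x xh : V) : Prop :=
  X xh /\ forall y, X y ->
    F xh + r xh + rho * bregman omega gw xh x <= F y + r y + rho * bregman omega gw y x.

Definition is_bregman_grad (X : set V) (gF : V -> V) (r omega : V -> R) (gw : V -> V)
    (rho : R) (x xp : V) : Prop :=
  X xp /\ forall y, X y ->
    dotp (gF x) xp + r xp + rho * bregman omega gw xp x <=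
    dotp (gF x) y + r y + rho * bregman omega gw y x.

(* Delta_rho(x) = rho^2 Dsym(xh, x) (and the same formula for Delta^+ with xp) *)
Definition Delta (omega : V -> R) (gw : V -> V) (rho : R) (x z : V) : R :=
  rho ^+ 2 * bregman_sym omega gw z x.

End Defs.

Definition Ccoef (R : realType) (l rho s : R) : R :=
  ((1 + s) * (rho - l) + (1 + s^-1) * l) / (rho - l - (1 + s^-1) * l).

(* Main.v *)
Require Import Defs.
From HB Require Import structures.
From mathcomp Require Import all_boot all_order all_algebra.
From mathcomp Require Import all_classical all_reals all_analysis.
From mathcomp Require Import ring lra.
Import Order.TTheory GRing.Theory Num.Theory.
Import numFieldNormedType.Exports.
Local Open Scope classical_set_scope.
Local Open Scope ring_scope.

Section Aux.
Variables (R : realType) (d : nat).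
Local Notation V := 'rV[R]_d.

Lemma dotpDr (u v w : V) : dotp u (v + w) = dotp u v + dotp u w.
Proof. rewrite /dotp -big_split; apply: eq_bigr => i _; by rewrite mxE mulrDr. Qed.

Lemma dotp0r (u : V) : dotp u 0 = 0.
Proof. rewrite /dotp big1 // => i _; by rewrite mxE mulr0. Qed.

Lemma dotpZr (u v : V) k : dotp u (k *: v) = k * dotp u v.
Proof. rewrite /dotp mulr_sumr; apply: eq_bigr => i _; rewrite mxE; ring. Qed.

Lemma dotpNr (u v : V) : dotp u (- v) = - dotp u v.
Proof. by rewrite -scaleN1r dotpZr mulN1r. Qed.

Lemma dotpBr (u v w : V) : dotp u (v - w) = dotp u v - dotp u w.
Proof. by rewrite dotpDr dotpNr. Qed.

Lemma diff_quot (f : V -> R) a v : differentiable f a ->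
  (fun h : R => h^-1 *: (f (h *: v + a) - f a)) @ 0^' --> 'd f a v.
Proof.
move=> df; rewrite -deriveE //.
have H := @diff_derivable R _ R^o f a v df.
exact: H.
Qed.

Lemma lin_quot (g a v : V) :
  (fun h : R => h^-1 *: (dotp g (h *: v + a) - dotp g a)) @ 0^' --> dotp g v.
Proof.
apply: cvg_near_cst; near=> h.
have hn0 : h != 0 by near: h; exact: withinT.
rewrite dotpDr dotpZr addrK /GRing.scale /= mulrA mulVf // mul1r.
Unshelve. all: by end_near.
Qed.


Lemma vi (X : set V) (phi r omega : V -> R) (gw : V -> V) rho x a y Lphi Lom :
  convex_set_ X -> convex_fun r -> X a -> X y ->
  (forall z, X z -> phi a + r a + rho * bregman omega gw a x <=
                    phi z + r z + rho * bregman omega gw z x) ->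
  (fun h : R => h^-1 *: (phi (h *: (y - a) + a) - phi a)) @ 0^' --> Lphi ->
  (fun h : R => h^-1 *: (omega (h *: (y - a) + a) - omega a)) @ 0^' --> Lom ->
  0 <= Lphi + rho * Lom - rho * dotp (gw x) (y - a) + r y - r a.
Proof.
move=> cX cr Xa Xy amin cphi com.
set q := fun h : R => h^-1 *: (phi (h *: (y - a) + a) - phi a) +
   rho * (h^-1 *: (omega (h *: (y - a) + a) - omega a)) - rho * dotp (gw x) (y - a) + r y - r a.
have cq : q @ 0^' --> Lphi + rho * Lom - rho * dotp (gw x) (y - a) + r y - r a.
  rewrite /q; apply: cvgD; last exact: cvg_cst.
  apply: cvgD; last exact: cvg_cst.
  apply: cvgD; last exact: cvg_cst.
  apply: cvgD => //; exact: cvgMr.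
have cq' := cvg_dnbhs_at_right cq.
apply: (cvgr_to_ge cq'); near=> h.
have h0 : 0 < h by near: h; exact: nbhs_right_gt.
have h1 : h < 1 by near: h; exact: nbhs_right_lt.
set z := h *: (y - a) + a.
have ez : z = h *: y + (1 - h) *: a by rewrite /z scalerBr scalerBl scale1r addrA addrAC.
have Xz : X z by rewrite ez; apply: cX => //; rewrite (ltW h0) (ltW h1).
have rz : r z <= h * r y + (1 - h) * r a by rewrite ez; apply: cr; rewrite (ltW h0) (ltW h1).
have mz := amin z Xz.
have Dz : bregman omega gw z x - bregman omega gw a x =
   omega z - omega a - h * dotp (gw x) (y - a).
  rewrite /bregman !dotpBr /z dotpDr dotpZr dotpBr; ring.
rewrite /q -/z /GRing.scale /=.
have : 0 <= phi z - phi a + h * (r y - r a) + rho * (omega z - omega a) - rho * (h * dotp (gw x) (y - a)).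
  have e : rho * (omega z - omega a) - rho * (h * dotp (gw x) (y - a)) =
    rho * (bregman omega gw z x - bregman omega gw a x) by rewrite Dz; ring.
  rewrite -addrA e; lra.
move=> H.
have -> : h^-1 * (phi z - phi a) + rho * (h^-1 * (omega z - omega a)) - rho * dotp (gw x) (y - a) + r y - r a
  = h^-1 * (phi z - phi a + h * (r y - r a) + rho * (omega z - omega a) - rho * (h * dotp (gw x) (y - a))).
  field; exact: lt0r_neq0.
by apply: mulr_ge0 => //; rewrite invr_ge0 ltW.
Unshelve. all: by end_near.
Qed.

End Aux.

Lemma alg (R : realType) (l rho s A B P : R) : 0 < rho -> 0 < s -> l / s + 2 * l < rho ->
  0 <= A -> 0 <= B -> 0 <= P -> (rho - l) * P <= l * (A + B) ->
  Num.sqrt B <= Num.sqrt P + Num.sqrt A -> B <= Ccoef l rho s * A.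
Proof.
move=> rho0 s0 hr A0 B0 P0 key tri.
set si := s^-1.
have ssi : s * si = 1 by rewrite /si mulfV // lt0r_neq0.
have si0 : 0 < si by rewrite /si invr_gt0.
have hr' : l * si + 2 * l < rho by [].
set a := Num.sqrt A; set b := Num.sqrt B; set p := Num.sqrt P.
have eA : A = a ^+ 2 by rewrite sqr_sqrtr.
have eB : B = b ^+ 2 by rewrite sqr_sqrtr.
have eP : P = p ^+ 2 by rewrite sqr_sqrtr.
have a0 : 0 <= a := sqrtr_ge0 _.
have b0 : 0 <= b := sqrtr_ge0 _.
have p0 : 0 <= p := sqrtr_ge0 _.
have B1 : B <= (p + a) ^+ 2.
  have h : 0 <= (p + a - b) * (p + a + b).
    apply: mulr_ge0; first by rewrite subr_ge0.
    by apply: addr_ge0 => //; exact: addr_ge0.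
  have -> : B = b ^+ 2 by rewrite sqr_sqrtr.
  nra.
have B2 : s * B <= s * ((1 + s) * A + (1 + si) * P).
  have h1 : s * B <= s * (p + a) ^+ 2 by apply: ler_wpM2l => //; exact: ltW.
  have h2 : 0 <= (s * a - p) ^+ 2 := sqr_ge0 _.
  rewrite eA eP; rewrite eA eP in h1 h2 key.
  have -> : s * ((1 + s) * a ^+ 2 + (1 + si) * p ^+ 2) = s * a^+2 + s^+2 * a^+2 + s * p^+2 + (s * si) * p ^+2 by ring.
  rewrite ssi; nra.
have B3 : B <= (1 + s) * A + (1 + si) * P by rewrite -(ler_pM2l s0).
have rl : 0 < rho - l.
  case: (lerP 0 l) => hl; last lra.
  have : 0 <= l * si by apply: mulr_ge0 => //; exact: ltW.
  lra.
have den0 : 0 < rho - l - (1 + si) * l by lra.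
have B4 : (rho - l) * B <= (rho - l) * ((1 + s) * A) + (1 + si) * (l * (A + B)).
  have := ler_wpM2l (ltW rl) B3.
  have := ler_wpM2l (ltW (addr_gt0 ltr01 si0)) key.
  nra.
rewrite /Ccoef -/si mulrAC ler_pdivlMr //.
nra.
Qed.

Theorem lemma1 (R : realType) (d : nat) (X S : set 'rV[R]_d) (N : 'rV[R]_d -> R)
    (F r omega : 'rV[R]_d -> R) (gF gw : 'rV[R]_d -> 'rV[R]_d) (l : R) :
  closed X -> convex_set_ X ->
  is_norm N ->
  (forall x, has_gradient_at F gF x) ->
  convex_fun r -> lsc r ->
  is_DGF X S N omega gw ->
  rel_smooth (X `&` S) F gF omega gw l ->
  is_metric_on (X `&` S) (fun x y => Num.sqrt (bregman_sym omega gw x y)) ->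
  forall x, X x -> S x ->
  (forall rho s xh xp, 0 < rho -> 0 < s -> l / s + 2 * l < rho ->
     is_bregman_prox X F r omega gw rho x xh -> S xh ->
     is_bregman_grad X gF r omega gw rho x xp -> S xp ->
     Delta omega gw rho x xh / Ccoef l rho s <= Delta omega gw rho x xp /\
     Delta omega gw rho x xp <= Ccoef l rho s * Delta omega gw rho x xh) /\
  (0 < l ->
     Ccoef l (4 * l) 1 = 8 /\
     forall xh xp,
       is_bregman_prox X F r omega gw (4 * l) x xh -> S xh ->
       is_bregman_grad X gF r omega gw (4 * l) x xp -> S xp ->
       Delta omega gw (4 * l) x xh / 8 <= Delta omega gw (4 * l) x xp /\
       Delta omega gw (4 * l) x xp <= 8 * Delta omega gw (4 * l) x xh).
Proof.
move=> cX cvX nN hF cr lr [oS [riS [hom _]]] rs [m1 [m2 [m3 m4]]] x Xx Sx.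
have Dnn : forall u w, X u -> S u -> X w -> S w -> 0 <= bregman_sym omega gw u w.
  move=> u w Xu Su Xw Sw; case: (lerP 0 (bregman_sym omega gw u w)) => // hneg.
  have : Num.sqrt (bregman_sym omega gw u w) = 0 by rewrite ler0_sqrtr // ltW.
  move/(proj1 (m2 u w (conj Xu Su) (conj Xw Sw))) => euw.
  move: hneg; rewrite euw /bregman_sym /bregman !subrr dotp0r; lra.
have P1 : forall rho s xh xp, 0 < rho -> 0 < s -> l / s + 2 * l < rho ->
     is_bregman_prox X F r omega gw rho x xh -> S xh ->
     is_bregman_grad X gF r omega gw rho x xp -> S xp ->
     Delta omega gw rho x xh / Ccoef l rho s <= Delta omega gw rho x xp /\
     Delta omega gw rho x xp <= Ccoef l rho s * Delta omega gw rho x xh.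
  move=> rho s xh xp rho0 s0 hr [Xxh hmin] Sxh [Xxp pmin] Sxp.
  have [dFh gFh] := hF xh.
  have [[dOh gOh] _] := hom xh Sxh.
  have [[dOp gOp] _] := hom xp Sxp.
  have vh := @vi _ _ X F r omega gw rho x xh xp _ _ cvX cr Xxh Xxp hmin (@diff_quot _ _ F xh (xp - xh) dFh) (@diff_quot _ _ omega xh (xp - xh) dOh).
  rewrite gFh gOh in vh.
  have vp := @vi _ _ X (dotp (gF x)) r omega gw rho x xp xh _ _ cvX cr Xxp Xxh pmin (@lin_quot _ _ (gF x) xp (xh - xp)) (@diff_quot _ _ omega xp (xh - xp) dOp).
  rewrite gOp in vp.
  have r1 := rs xp xh (conj Xxp Sxp) (conj Xxh Sxh).
  have r2 := rs xp x (conj Xxp Sxp) (conj Xx Sx).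
  have r3 := rs xh x (conj Xxh Sxh) (conj Xx Sx).
  have r4 := rs xh xp (conj Xxh Sxh) (conj Xxp Sxp).
  have r5 := rs x xp (conj Xx Sx) (conj Xxp Sxp).
  have r6 := rs x xh (conj Xx Sx) (conj Xxh Sxh).
  set A := bregman_sym omega gw xh x.
  set B := bregman_sym omega gw xp x.
  set P := bregman_sym omega gw xp xh.
  have key : (rho - l) * P <= l * (A + B).
    move: vh vp r1 r2 r3 r4 r5 r6; rewrite /A /B /P /bregman_sym /bregman !dotpBr.
    move=> vh vp [r1 r1'] [r2 r2'] [r3 r3'] [r4 r4'] [r5 r5'] [r6 r6'].
    lra.
  have A0 : 0 <= A by apply: Dnn.
  have B0 : 0 <= B by apply: Dnn.
  have P0 : 0 <= P by apply: Dnn.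
  have t1 := m4 xp xh x (conj Xxp Sxp) (conj Xxh Sxh) (conj Xx Sx).
  have t2 := m4 xh xp x (conj Xxh Sxh) (conj Xxp Sxp) (conj Xx Sx).
  have eP : bregman_sym omega gw xh xp = P by rewrite /P /bregman_sym addrC.
  rewrite eP /= -/A -/B in t2.
  rewrite /= -/A -/B -/P in t1.
  have BA := @alg R l rho s A B P rho0 s0 hr A0 B0 P0 key t1.
  have AB : A <= Ccoef l rho s * B.
    apply: (@alg R l rho s B A P rho0 s0 hr B0 A0 P0) => //; by rewrite [B + A]addrC.
  rewrite /Delta -/A -/B.
  case: (lerP 0 l) => hl.
    have si0 : 0 < s^-1 by rewrite invr_gt0.
    have hr' : l * s^-1 + 2 * l < rho by [].
    have lsi : 0 <= l * s^-1 by apply: mulr_ge0 => //; lra.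
    have C0 : 0 < Ccoef l rho s.
      rewrite /Ccoef; apply: divr_gt0.
        have : 0 <= (1 + s^-1) * l by apply: mulr_ge0 => //; lra.
        have : 0 < (1 + s) * (rho - l) by apply: mulr_gt0; lra.
        lra.
      lra.
    split.
      rewrite ler_pdivrMr //; have := ler_wpM2l (sqr_ge0 rho) AB; lra.
    have := ler_wpM2l (sqr_ge0 rho) BA; lra.
  have eA : A = 0.
    apply/eqP; rewrite eq_le A0 andbT.
    move: r3 r6; rewrite /A /bregman_sym => [[r3 r3']] [r6 r6'].
    nra.
  have eB : B = 0.
    apply/eqP; rewrite eq_le B0 andbT.
    move: r2 r5; rewrite /B /bregman_sym => [[r2 r2']] [r5 r5'].
    nra.
  by rewrite eA eB !mulr0 mul0r.
split; first exact: P1.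
move=> l0.
have C8 : Ccoef l (4 * l) 1 = 8.
  rewrite /Ccoef invr1.
  have -> : 4 * l - l - (1 + 1) * l = l by ring.
  have -> : (1 + 1) * (4 * l - l) + (1 + 1) * l = 8 * l by ring.
  by rewrite mulfK // lt0r_neq0.
split => // xh xp hp Sxh hg Sxp.
rewrite -C8; apply: P1 => //; first lra.
rewrite divr1; lra.
Qed.
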